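(* For every positive integer $n$ there exist a present-bias parameter $b>1$ and an instance with $O(n)$ vertices such that the set of rewards $R$ placed at $t$ for which the sophisticated agent (with abandonment) reaches $t$ from the start node consists of exponentially many (in $n$) pairwise disjoint intervals.
   Context: An instance is a finite directed acyclic graph $G=(V,E)$ with nonnegative edge costs $c(u,v)$, a start node and a target node $t$, where $t$ is the unique node with no outgoing edges. Sophisticated agent with bias $b$ and reward $R$ at $t$, which may abandon: process nodes in reverse topological order; $t$ is never abandoned and $C_R(t)=0$. For $u\neq t$, among out-edges $(u,v)$ with $v$ not abandoned let $P(u,v)=b\,c(u,v)+C_R(v)$; if none exists or all have $P(u,v)>R$, $u$ is abandoned; otherwise the agent at $u$ moves to $v^*(u)\in\arg\min P(u,v)$ and $C_R(u)=c(u,v^*(u))+C_R(v^*(u))$. The agent reaches $t$ iff the start node is not abandoned. *)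

(* Defs.v *)
From Stdlib Require Import Reals List Arith.
Import ListNotations.
Open Scope R_scope.

(* An instance: vertices are 0, ..., nV-1; the target is vertex 0.
   cost u v = Some c  means there is an edge (u,v) of cost c.
   Edges always go from a larger index to a smaller index, so the index
   order is a topological order (every finite DAG can be so relabelled). *)
Record instance := Instance {
  nV : nat;
  cost : nat -> nat -> option R;
  start : nat
}.

Definition valid_instance (G : instance) : Prop :=
  (start G < nV G)%nat /\
  (0 < nV G)%nat /\
  (forall u v c, cost G u v = Some c -> (v < u)%nat /\ (u < nV G)%nat /\ 0 <= c) /\
  (* every vertex other than the target 0 has an outgoing edge, so the
     target is the unique node with no outgoing edges *)
  (forall u, (0 < u)%nat -> (u < nV G)%nat -> exists v c, cost G u v = Some c).

(* Status of a node: (abandoned?, C_R(u)). *)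
Definition status := (bool * R)%type.

(* Scan the out-neighbours v = 0 .. u-1 of u, keeping the best non-abandoned
   candidate (v, c(u,v), P(u,v)) with P(u,v) = b*c(u,v) + C_R(v); ties are broken
   in favour of the smallest index (a candidate replaces the current best only
   if strictly better). *)
Fixpoint best_cand (b : R) (G : instance) (u : nat) (tab : list status)
  (vs : list nat) (acc : option (nat * R * R)) : option (nat * R * R) :=
  match vs with
  | [] => acc
  | v :: vs' =>
      let acc' :=
        match cost G u v with
        | None => acc
        | Some c =>
            let (ab, Cv) := nth v tab (true, 0) in
            if ab then acc else
            let P := b * c + Cv in
            match acc with
            | None => Some (v, c, P)
            | Some (_, _, Pbest) =>
                if Rlt_dec P Pbest then Some (v, c, P) else acc
            end
        end in
      best_cand b G u tab vs' acc'
  end.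

Definition node_status (b Rw : R) (G : instance) (u : nat) (tab : list status)
  : status :=
  match u with
  | O => (false, 0)
  | S _ =>
      match best_cand b G u tab (seq 0 u) None with
      | None => (true, 0)
      | Some (v, c, P) =>
          if Rlt_dec Rw P then (true, 0)
          else (false, c + snd (nth v tab (true, 0)))
      end
  end.

Fixpoint status_table (b Rw : R) (G : instance) (k : nat) : list status :=
  match k with
  | O => []
  | S k' => let tab := status_table b Rw G k' in
            tab ++ [node_status b Rw G k' tab]
  end.

Definition abandoned (b Rw : R) (G : instance) (u : nat) : bool :=
  fst (nth u (status_table b Rw G (nV G)) (true, 0)).

Definition reaches (b Rw : R) (G : instance) : Prop :=
  abandoned b Rw G (start G) = false.

(* A (possibly degenerate, open/closed/half-open, bounded or not) interval of
   reals: a nonempty convex set. *)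
Definition is_interval (I : R -> Prop) : Prop :=
  (exists x, I x) /\
  forall x y z, I x -> I z -> x <= y <= z -> I y.

(* S consists of exactly k pairwise disjoint intervals I_0 < I_1 < ... < I_{k-1},
   consecutive ones separated by points not in S (so these are the connected
   components of S and k is their number). *)
Definition consists_of_intervals (S : R -> Prop) (k : nat) : Prop :=
  exists I : nat -> R -> Prop,
    (forall i, (i < k)%nat -> is_interval (I i)) /\
    (forall x, S x <-> exists i, (i < k)%nat /\ I i x) /\
    (forall i j x y, (i < j)%nat -> (j < k)%nat -> I i x -> I j y ->
        exists z, x < z < y /\ ~ S z).

(* Main.v *)
Require Import Defs.
From Stdlib Require Import Reals List Arith Lia Lra.
Import ListNotations.
Open Scope R_scope.

Definition Inv (E : R -> Prop) (al w be : R) (m : nat) : Prop :=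
 exists l r : nat -> R,
 (forall i, (i < m)%nat -> al < l i /\ l i < r i /\ r i <= al + w) /\
 (forall i j, (i < j)%nat -> (j < m)%nat -> r i < l j) /\
 al + w < be /\
 (forall x, E x <-> (exists i, (i < m)%nat /\ l i <= x < r i) \/ be <= x).

Lemma inv_step (E E' : R -> Prop) al w be m t h :
  0 < w -> t = 2*al -> h = 2*al - w -> Inv E al w be m ->
  (forall x, E' x <-> (3/2*t <= x /\ E (x - t)) \/ ((3/2*h <= x /\ x < 3/2*t) /\ E (x - h))) ->
  Inv E' (3*al - w) (2*w) (be + 2*al) (2*m).
Proof.
  intros Hw Ht Hh [l [r [H1 [H2 [H3 H4]]]]] HE.
  exists (fun i => if (i <? m)%nat then l i + h else l (i - m)%nat + t).
  exists (fun i => if (i <? m)%nat then r i + h else r (i - m)%nat + t).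
  split; [|split; [|split]].
  - intros i Hi. destruct (Nat.ltb_spec i m).
    + destruct (H1 i H) as (?&?&?). lra.
    + destruct (H1 (i-m)%nat ltac:(lia)) as (?&?&?). lra.
  - intros i j Hij Hj. destruct (Nat.ltb_spec i m); destruct (Nat.ltb_spec j m).
    + specialize (H2 i j Hij H0). lra.
    + destruct (H1 i H) as (?&?&?). destruct (H1 (j-m)%nat ltac:(lia)) as (?&?&?). lra.
    + lia.
    + specialize (H2 (i-m)%nat (j-m)%nat ltac:(lia) ltac:(lia)). lra.
  - lra.
  - intro x. rewrite HE. split.
    + intros [[Hx HEx]|[[Hx1 Hx2] HEx]]; apply H4 in HEx.
      * destruct HEx as [[i [Hi Hx']]|Hx'].
        -- left. exists (i+m)%nat. split; [lia|].
           destruct (Nat.ltb_spec (i+m) m); [lia|].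
           replace (i + m - m)%nat with i by lia. lra.
        -- right. lra.
      * destruct HEx as [[i [Hi Hx']]|Hx'].
        -- left. exists i. split; [lia|].
           destruct (Nat.ltb_spec i m); [|lia]. lra.
        -- exfalso. lra.
    + intros [[i [Hi Hx]]|Hx].
      * destruct (Nat.ltb_spec i m).
        -- destruct (H1 i H) as (?&?&?). right. split; [lra|].
           apply H4. left. exists i. split; [auto|lra].
        -- destruct (H1 (i-m)%nat ltac:(lia)) as (?&?&?). left. split; [lra|].
           apply H4. left. exists (i-m)%nat. split; [lia|lra].
      * left. split; [lra|]. apply H4. right. lra.
Qed.

Lemma inv_intervals (E : R -> Prop) al w be m :
  Inv E al w be m -> consists_of_intervals E (S m).
Proof.
  intros [l [r [H1 [H2 [H3 H4]]]]].
  exists (fun i x => if (i <? m)%nat then l i <= x < r i else be <= x).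
  split; [|split].
  - intros i Hi. destruct (Nat.ltb_spec i m).
    + destruct (H1 i H) as (?&?&?). split.
      * exists (l i). lra.
      * intros. lra.
    + split.
      * exists be. lra.
      * intros. lra.
  - intro x. rewrite H4. split.
    + intros [[i [Hi Hx]]|Hx].
      * exists i. split; [lia|]. destruct (Nat.ltb_spec i m); [auto|lia].
      * exists m. split; [lia|]. rewrite Nat.ltb_irrefl. auto.
    + intros [i [Hi Hx]]. destruct (Nat.ltb_spec i m).
      * left. exists i. auto.
      * right. auto.
  - intros i j x y Hij Hj Hx Hy.
    destruct (Nat.ltb_spec i m); [|lia].
    destruct (H1 i H) as (?&?&?).
    exists (r i). split.
    + split; [lra|]. destruct (Nat.ltb_spec j m).
      * specialize (H2 i j Hij H7). lra.
      * lra.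
    + rewrite H4. intros [[k [Hk Hx']]|Hx'].
      * destruct (lt_eq_lt_dec k i) as [[Hki|Hki]|Hki].
        -- specialize (H2 k i Hki H). destruct (H1 k Hk) as (?&?&?). lra.
        -- subst. lra.
        -- specialize (H2 i k Hki Hk). lra.
      * lra.
Qed.

Definition b0 : R := 3/2.
Fixpoint alpha (j:nat) : R := match j with O => 13/2 | S j' => 3 * alpha j' - 2^j' end.
Fixpoint beta (j:nat) : R := match j with O => 8 | S j' => beta j' + 2 * alpha j' end.
Definition hv (d:nat) : R := match d with 0%nat => 2 | 1%nat => 4 | S (S j) => 2 * alpha j - 2^j end.
Definition tv (d:nat) : R := match d with 0%nat => 5/2 | 1%nat => 5 | S (S j) => 2 * alpha j end.
Definition psi (d:nat) (x:R) : option R :=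
  if Rle_dec (b0 * tv d) x then Some (x - tv d)
  else if Rle_dec (b0 * hv d) x then Some (x - hv d) else None.
Fixpoint Gs (D j : nat) (x : R) : option R :=
  match j with O => Some x
  | S j' => match Gs D j' x with Some y => psi (D - j') y | None => None end end.

Lemma alpha_pos j : 0 < alpha j /\ 2^j < 2/3 * alpha j.
Proof.
  induction j; simpl; [lra|]. destruct IHj. split; lra.
Qed.

Lemma params d : 0 <= hv d /\ 0 <= tv d /\ tv d < b0 * hv d.
Proof.
  unfold b0. destruct d as [|[|j]]; simpl; try lra.
  destruct (alpha_pos j). assert (0 < 2^j) by (apply pow_lt; lra). lra.
Qed.

Lemma Gs_unfold j : forall D x, Gs D (S j) x =
  match psi D x with Some y => Gs (D-1) j y | None => None end.
Proof.
  induction j; intros D x.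
  - simpl. rewrite Nat.sub_0_r. destruct (psi D x); auto.
  - change (Gs D (S (S j)) x) with
      (match Gs D (S j) x with Some y => psi (D - S j) y | None => None end).
    rewrite IHj. destruct (psi D x); auto. simpl.
    replace (D - 1 - j)%nat with (D - S j)%nat by lia. auto.
Qed.

Definition Dom d x := Gs d (S d) x <> None.

Lemma psi_some d x y : psi d x = Some y <->
  (b0 * tv d <= x /\ y = x - tv d) \/ ((b0 * hv d <= x /\ x < b0 * tv d) /\ y = x - hv d).
Proof.
  unfold psi. destruct (Rle_dec (b0 * tv d) x); [|destruct (Rle_dec (b0 * hv d) x)];
  split; intro H; try (inversion H; subst); try lra;
  destruct H as [[? ?]|[[? ?] ?]]; subst; auto; try lra; try discriminate.
Qed.

Lemma Dom_S d x : Dom (S d) x <->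
  (b0 * tv (S d) <= x /\ Dom d (x - tv (S d))) \/
  ((b0 * hv (S d) <= x /\ x < b0 * tv (S d)) /\ Dom d (x - hv (S d))).
Proof.
  unfold Dom. rewrite Gs_unfold. replace (S d - 1)%nat with d by lia.
  destruct (psi (S d) x) eqn:E.
  - apply psi_some in E. destruct E as [[? ?]|[[? ?] ?]]; subst.
    + split; intro H1; [left; auto|]. destruct H1 as [[? ?]|[? ?]]; auto; lra.
    + split; intro H1; [right; auto|]. destruct H1 as [[? ?]|[? ?]]; auto; lra.
  - split; intro H; [congruence|].
    assert (forall y, psi (S d) x <> Some y) by (intros y; rewrite E; discriminate).
    exfalso; destruct H as [[? ?]|[[? ?] ?]].
    + apply (H0 (x - tv (S d))). apply psi_some. left; auto.
    + apply (H0 (x - hv (S d))). apply psi_some. right; auto.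
Qed.

Lemma Dom_0 x : Dom 0 x <-> 3 <= x.
Proof.
  unfold Dom. simpl. unfold psi, b0. simpl.
  destruct (Rle_dec (3/2*(5/2)) x); [split; intros; [lra|discriminate]|].
  destruct (Rle_dec (3/2*2) x); split; intros; try lra; try discriminate; congruence.
Qed.

Lemma Dom_inv j : Inv (Dom (S j)) (alpha j) (2^j) (beta j) (2^j)%nat.
Proof.
  induction j.
  - exists (fun _ => 7), (fun _ => 15/2). simpl. split; [|split; [|split]].
    + intros; lra.
    + intros; lia.
    + lra.
    + intro x. rewrite Dom_S. rewrite !Dom_0. unfold b0; simpl. split.
      * intros [[? ?]|[[? ?] ?]]; [right; lra|left; exists 0%nat; split; [lia|lra]].
      * intros [[i [Hi ?]]|?]; [right; split; [split|]; lra| left; split; lra].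
  - simpl (2 ^ S j)%nat. simpl alpha. simpl beta.
    replace (2 ^ S j) with (2 * 2^j) by (simpl; ring).
    apply (inv_step (Dom (S j)) _ _ _ _ _ (tv (S (S j))) (hv (S (S j)))); auto.
    + apply pow_lt; lra.
    + intro x. rewrite Dom_S. unfold b0. tauto.
Qed.

Definition costf (D : nat) (u v : nat) : option R :=
  if (u <? 2*D+3)%nat then
    match u with O => None
    | S u' => if Nat.odd u' then
                (if (v =? 2*Nat.div2 u')%nat then Some (hv (D - Nat.div2 u'))
                 else if (v =? S (2 * Nat.div2 u'))%nat then Some 0 else None)
              else (if (v =? 2 * Nat.div2 u')%nat then Some (tv (D - Nat.div2 u')) else None)
    end
  else None.

Definition inst (D : nat) : instance := Instance (2*D+3) (costf D) (2*D+2).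

Lemma cost_odd D j v : (j <= D)%nat ->
  cost (inst D) (S (2*j)) v = if (v =? 2*j)%nat then Some (tv (D-j)) else None.
Proof.
  intro H. unfold inst; cbn [cost]; unfold costf.
  destruct (Nat.ltb_spec (S (2*j)) (2*D+3)); [|lia].
  rewrite Nat.odd_even, Nat.div2_double. auto.
Qed.

Lemma cost_even D j v : (j <= D)%nat ->
  cost (inst D) (S (S (2*j))) v = if (v =? 2*j)%nat then Some (hv (D-j))
     else if (v =? S (2*j))%nat then Some 0 else None.
Proof.
  intro H. unfold inst; cbn [cost]; unfold costf.
  destruct (Nat.ltb_spec (S (S (2*j))) (2*D+3)); [|lia].
  replace (S (2*j)) with (2*j+1)%nat by lia.
  rewrite Nat.odd_odd, Nat.div2_odd'. replace (2*j+1)%nat with (S (2*j)) by lia. auto.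
Qed.

Lemma valid D : valid_instance (inst D).
Proof.
  split; [simpl; lia|split; [simpl; lia|split]].
  - intros u v c. unfold inst; cbn [cost]; unfold costf.
    destruct (Nat.ltb_spec u (2*D+3)); [|discriminate].
    destruct u as [|u']; [discriminate|].
    pose proof (Nat.div2_odd u').
    destruct (Nat.odd u'); simpl in H0.
    + destruct (Nat.eqb_spec v (2*Nat.div2 u')).
      * intro E; inversion E. split; [lia|split; [simpl; lia|apply params]].
      * destruct (Nat.eqb_spec v (S (2*Nat.div2 u'))); [|discriminate].
        intro E; inversion E. split; [lia|split; [simpl; lia|lra]].
    + destruct (Nat.eqb_spec v (2*Nat.div2 u')); [|discriminate].
      intro E; inversion E. split; [lia|split; [simpl; lia|apply params]].
  - intros u Hu Hu2. unfold inst; cbn [cost]; unfold costf. simpl nV in Hu2.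
    destruct (Nat.ltb_spec u (2*D+3)); [|lia].
    destruct u as [|u']; [lia|].
    exists (2 * Nat.div2 u')%nat.
    destruct (Nat.odd u'); rewrite Nat.eqb_refl; eexists; eauto.
Qed.

Lemma st_len b R G k : length (status_table b R G k) = k.
Proof. induction k; simpl; auto. rewrite length_app, IHk. simpl. lia. Qed.

Lemma st_stable b R G u k d : (u < k)%nat ->
  nth u (status_table b R G k) d = nth u (status_table b R G (S u)) d.
Proof.
  induction k; intro H; [lia|].
  destruct (Nat.eq_dec u k); [subst; auto|].
  simpl status_table at 1. rewrite app_nth1 by (rewrite st_len; lia). apply IHk; lia.
Qed.

Lemma st_last b R G u d :
  nth u (status_table b R G (S u)) d = node_status b R G u (status_table b R G u).
Proof.
  simpl. rewrite app_nth2 by (rewrite st_len; lia). rewrite st_len, Nat.sub_diag. auto.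
Qed.

Lemma bc_app b G u tab l1 l2 acc :
  best_cand b G u tab (l1 ++ l2) acc = best_cand b G u tab l2 (best_cand b G u tab l1 acc).
Proof. revert acc; induction l1; intro acc; simpl; auto. Qed.

Lemma bc_none b G u tab l acc : (forall v, In v l -> cost G u v = None) ->
  best_cand b G u tab l acc = acc.
Proof.
  revert acc; induction l; intros acc H; simpl; auto.
  rewrite H by (left; auto). apply IHl. intros; apply H; right; auto.
Qed.

Section S.
Variable D : nat.
Variable R0 : R.
Definition tabk k := status_table b0 R0 (inst D) k.
Definition sU u := nth u (tabk (S u)) (true, 0).
Definition encU (o : option R) : status :=
  match o with Some y => (false, R0 - y) | None => (true, 0) end.
Definition encM (d : nat) (o : option R) : status :=
  match o with Some x => if Rle_dec (b0 * tv d) x then (false, R0 - x + tv d) else (true, 0)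
  | None => (true, 0) end.

Lemma lookup u v : (v < u)%nat -> nth v (tabk u) (true,0) = sU v.
Proof. intro H. unfold sU, tabk. apply st_stable. auto. Qed.

Lemma sU_node u : sU u = node_status b0 R0 (inst D) u (tabk u).
Proof. unfold sU, tabk. apply st_last. Qed.

Lemma s0 : sU 0 = encU (Gs D 0 R0).
Proof. rewrite sU_node. simpl. f_equal. ring. Qed.

Lemma s_odd j : (j <= D)%nat -> sU (2*j) = encU (Gs D j R0) ->
  sU (S (2*j)) = encM (D - j) (Gs D j R0).
Proof.
  intros Hj Hs. rewrite sU_node. unfold node_status.
  rewrite seq_S, bc_app.
  rewrite (bc_none _ _ _ _ _ None).
  2:{ intros v Hv. apply in_seq in Hv. rewrite cost_odd by auto.
      destruct (Nat.eqb_spec v (2*j)); [lia|auto]. }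
  rewrite ?Nat.add_0_l; cbn [best_cand app]. rewrite cost_odd by auto. rewrite Nat.eqb_refl.
  rewrite !lookup by lia. rewrite Hs.
  destruct (params (D - j)) as (Hh & Ht & Hth).
  unfold encU, encM. destruct (Gs D j R0) as [x|]; cbv beta iota.
  - destruct (Rle_dec (b0 * tv (D - j)) x); destruct (Rlt_dec R0 (b0 * tv (D - j) + (R0 - x))); try lra.
    + f_equal. rewrite lookup by lia. rewrite Hs. simpl. ring.
    + auto.
  - auto.
Qed.

Lemma s_even j : (j <= D)%nat -> sU (2*j) = encU (Gs D j R0) ->
  sU (2 * S j) = encU (Gs D (S j) R0).
Proof.
  intros Hj Hs. pose proof (s_odd j Hj Hs) as Ho.
  replace (2 * S j)%nat with (S (S (2*j))) by lia.
  rewrite sU_node. unfold node_status.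
  rewrite seq_S, seq_S, <- app_assoc, bc_app.
  rewrite (bc_none _ _ _ _ _ None).
  2:{ intros v Hv. apply in_seq in Hv. rewrite cost_even by auto.
      destruct (Nat.eqb_spec v (2*j)); [lia|].
      destruct (Nat.eqb_spec v (S (2*j))); [lia|auto]. }
  rewrite ?Nat.add_0_l; cbn [best_cand app]. rewrite !cost_even by auto.
  rewrite Nat.eqb_refl. rewrite Nat.eqb_refl.
  destruct (Nat.eqb_spec (S (2*j)) (2*j)); [lia|].
  rewrite (lookup (S (S (2*j))) (2*j)) by lia.
  rewrite (lookup (S (S (2*j))) (S (2*j))) by lia.
  rewrite Hs, Ho.
  destruct (params (D - j)) as (Hh & Ht & Hth).
  simpl Gs. replace (D - j)%nat with (D - j)%nat by auto.
  unfold encU, encM, psi. destruct (Gs D j R0) as [x|].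
  - destruct (Rle_dec (b0 * tv (D - j)) x).
    + cbv iota beta.
      destruct (Rlt_dec (b0 * 0 + (R0 - x + tv (D - j))) (b0 * hv (D - j) + (R0 - x))); [|lra].
      destruct (Rlt_dec R0 (b0 * 0 + (R0 - x + tv (D - j)))); [unfold b0 in *; lra|].
      rewrite (lookup (S (S (2*j))) (S (2*j))) by lia. rewrite Ho. simpl.
      destruct (Rle_dec (b0 * tv (D - j)) x); [|lra]. simpl. f_equal. ring.
    + cbv iota beta.
      destruct (Rlt_dec R0 (b0 * hv (D - j) + (R0 - x))).
      * destruct (Rle_dec (b0 * hv (D - j)) x); [lra|auto].
      * destruct (Rle_dec (b0 * hv (D - j)) x); [|lra].
        rewrite (lookup (S (S (2*j))) (2*j)) by lia. rewrite Hs. simpl. f_equal. ring.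
  - auto.
Qed.

Lemma s_all j : (j <= S D)%nat -> sU (2*j) = encU (Gs D j R0).
Proof.
  induction j; intro H.
  - apply s0.
  - apply s_even; [lia|]. apply IHj; lia.
Qed.
End S.

Lemma coi_ext (S1 S2 : R -> Prop) k : (forall x, S1 x <-> S2 x) ->
  consists_of_intervals S1 k -> consists_of_intervals S2 k.
Proof.
  intros H [I [H1 [H2 H3]]]. exists I. split; [auto|split].
  - intro x. rewrite <- H. auto.
  - intros i j x y a b c d. destruct (H3 i j x y a b c d) as [z [? ?]].
    exists z. split; auto. rewrite <- H. auto.
Qed.

Lemma reaches_Dom D Rw : reaches b0 Rw (inst D) <-> Dom D Rw.
Proof.
  unfold reaches, abandoned, Dom.
  change (start (inst D)) with (2*D+2)%nat. change (nV (inst D)) with (2*D+3)%nat.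
  rewrite st_stable by lia.
  replace (2*D+2)%nat with (2 * S D)%nat by lia.
  pose proof (s_all D Rw (S D) (le_n _)) as H. unfold sU, tabk in H. rewrite H.
  unfold encU. destruct (Gs D (S D) Rw); simpl; split; intros; congruence.
Qed.

Theorem mainTheorem6 :
  exists (C : nat) (a : R), 1 < a /\
    forall n : nat, (1 <= n)%nat ->
      exists (b : R) (G : instance),
        1 < b /\ valid_instance G /\ (nV G <= C * n)%nat /\
        exists k : nat, a ^ n <= INR k /\
          consists_of_intervals (fun Rw => reaches b Rw G) k.
Proof.
  exists 7%nat, 2. split; [lra|]. intros n Hn.
  exists b0, (inst (S n)). split; [unfold b0; lra|]. split; [apply valid|].
  split; [simpl nV; lia|].
  exists (S (2^n)). split.
  - rewrite S_INR, pow_INR. replace (INR 2) with 2 by (simpl; lra). lra.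
  - apply (coi_ext (Dom (S n))).
    + intro x. rewrite reaches_Dom. tauto.
    + eapply inv_intervals. apply Dom_inv.
Qed.
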